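(* In the conditional setting described in the context, fix $\mathbf x\in\mathcal X$ and assume A1$''$, A2 and A3. If there exists $k^\star\in\{1,\dots,K\}$ with $\inf_{\mathbf w\in\mathcal W^*}w_{k^\star}>\frac12$, then $\liminf_{n\to\infty}\Pr\big(Y_{\mathbf x}\in\mathcal C_{\mathrm{comb}}(\mathbf x;\mathcal D_n)\big)\ge1-\alpha$.
   Context: Conditional setting: fix $K\ge2$ and $\alpha\in(0,1)$. For each $n$, on a common probability space there is a random data set $\mathcal D_n$. For each $k\in\{1,\dots,K\}$ and each $\mathbf x\in\mathcal X\subseteq\mathbb R^p$, $\mathcal C_k(\mathbf x;\mathcal D_n)\subseteq\mathbb R$ is a prediction set determined by $\mathcal D_n$ and $\mathbf x$. For a fixed test covariate value $\mathbf x$, $Y_{\mathbf x}$ denotes a real random variable distributed as the conditional law of the response given covariate $\mathbf x$, independent of $\mathcal D_n$; conditioning on $\{\mathbf X=\mathbf x\}$ means evaluating at $\mathbf x$ with response $Y_{\mathbf x}$. The events $\{Y_{\mathbf x}\in\mathcal C_k(\mathbf x;\mathcal D_n)\}$ are assumed measurable. Let $\Delta^{K-1}=\{\mathbf w\in[0,1]^K:w_k\ge0,\sum_k w_k=1\}$, let $\widehat{\mathbf w}_n=(\widehat w_{n,1},\dots,\widehat w_{n,K})$ be a $\sigma(\mathcal D_n)$-measurable random vector in $\Delta^{K-1}$, and let $\mathcal W^*\subseteq\Delta^{K-1}$ be a nonempty closed convex set; $\|\cdot\|$ is the Euclidean norm. A1$''$: $\sup_{k\in\{1,\dots,K\}}\big|\Pr(Y_{\mathbf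 x}\notin\mathcal C_k(\mathbf x;\mathcal D_n)\mid\mathcal D_n)-\alpha\big|\to0$ in probability as $n\to\infty$. A2: $\inf_{\mathbf w\in\mathcal W^*}\|\widehat{\mathbf w}_n-\mathbf w\|\to0$ in probability as $n\to\infty$. A3: $\mathcal C_{\mathrm{comb}}(\mathbf x;\mathcal D_n):=\{y\in\mathbb R:\sum_{k=1}^K\widehat w_{n,k}\mathbf 1\{y\in\mathcal C_k(\mathbf x;\mathcal D_n)\}>1/2\}$. *)

(* Defs.v *)
From HB Require Import structures.
From mathcomp Require Import all_boot all_order all_algebra.
From mathcomp Require Import all_classical all_reals all_analysis.
Set Implicit Arguments. Unset Strict Implicit. Unset Printing Implicit Defensive.
Import Order.TTheory GRing.Theory Num.Theory.
Import numFieldNormedType.Exports.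
Local Open Scope classical_set_scope.
Local Open Scope ring_scope.

(* Weight vectors in R^K are row vectors 'rV[R]_K; coordinate k is w 0 k. *)

Definition simplex (R : realType) (K : nat) : set 'rV[R]_K :=
  [set w | (forall k, 0 <= w ord0 k) /\ \sum_(k < K) w ord0 k = 1].

Definition enorm (R : realType) (K : nat) (v : 'rV[R]_K) : R :=
  Num.sqrt (\sum_(k < K) v ord0 k ^+ 2).

Definition convex_wset (R : realType) (K : nat) (W : set 'rV[R]_K) : Prop :=
  forall w1 w2 (t : R), W w1 -> W w2 -> 0 <= t -> t <= 1 ->
    W (t *: w1 + (1 - t) *: w2).

Definition dist_to (R : realType) (K : nat) (W : set 'rV[R]_K) (v : 'rV[R]_K) : R :=
  inf [set enorm (v - w) | w in W].

Definition cvg_in_prob (d : measure_display) (Omega : measurableType d)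
  (R : realType) (P : probability Omega R) (X : nat -> Omega -> R) (c : R) : Prop :=
  forall eps : R, 0 < eps ->
    (fun n => P [set om | eps <= `|X n om - c|]) @ \oo --> 0%E.

(* the combined (majority-vote) set of A3, on the data value t *)
Definition C_comb (R : realType) (K : nat) (Td : Type)
  (w : Td -> 'rV[R]_K) (C : 'I_K -> Td -> set R) (t : Td) : set R :=
  [set y | 2^-1 < \sum_(k < K) w t ord0 k * (y \in C k t)%:R].

(* Main.v *)
Require Import Defs.
From HB Require Import structures.
From mathcomp Require Import all_boot all_order all_algebra.
From mathcomp Require Import all_classical all_reals all_analysis.
From mathcomp Require Import ring lra.
Import Order.TTheory GRing.Theory Num.Theory.
Import numFieldNormedType.Exports.
Local Open Scope classical_set_scope.
Local Open Scope ring_scope.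

Section Enorm.
Variables (R : realType) (K : nat).
Implicit Types (a b : 'I_K -> R) (u v : 'rV[R]_K).

Lemma lagrange a b :
  \sum_i \sum_j (a i * b j - a j * b i) ^+ 2 =
  2%:R * ((\sum_i a i ^+ 2) * (\sum_j b j ^+ 2) - (\sum_i a i * b i) ^+ 2).
Proof.
have E1 : (\sum_i a i ^+ 2) * (\sum_j b j ^+ 2) = \sum_i \sum_j (a i * b j) ^+ 2.
  rewrite mulr_suml; apply: eq_bigr => i _; rewrite mulr_sumr.
  by apply: eq_bigr => j _; rewrite exprMn.
have E2 : (\sum_i a i * b i) ^+ 2 = \sum_i \sum_j (a i * b i) * (a j * b j).
  rewrite expr2 mulr_suml; apply: eq_bigr => i _; rewrite mulr_sumr //.
have E3 : \sum_i \sum_j (a j * b i) ^+ 2 = \sum_i \sum_j (a i * b j) ^+ 2.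
  by rewrite exchange_big.
have E4 : \sum_i \sum_j (2%:R * ((a i * b i) * (a j * b j))) =
   2%:R * \sum_i \sum_j (a i * b i) * (a j * b j).
  rewrite mulr_sumr; apply: eq_bigr => i _; by rewrite mulr_sumr.
rewrite E1 E2.
transitivity (\sum_i \sum_j ((a i * b j) ^+ 2 + (a j * b i) ^+ 2
    - 2%:R * ((a i * b i) * (a j * b j)))).
  by apply: eq_bigr => i _; apply: eq_bigr => j _; ring.
under eq_bigr do rewrite sumrB big_split.
rewrite sumrB big_split /= E3 E4; ring.
Qed.

Lemma cauchy_schwarz a b :
  (\sum_i a i * b i) ^+ 2 <= (\sum_i a i ^+ 2) * (\sum_j b j ^+ 2).
Proof.
rewrite -subr_ge0.
have : 0 <= \sum_i \sum_j (a i * b j - a j * b i) ^+ 2.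
  by apply: sumr_ge0 => i _; apply: sumr_ge0 => j _; exact: sqr_ge0.
rewrite lagrange pmulr_rge0 //.
Qed.

Lemma enorm_ge0 v : 0 <= enorm v.
Proof. exact: sqrtr_ge0. Qed.

Lemma sumsq_ge0 v : 0 <= \sum_k v ord0 k ^+ 2.
Proof. by apply: sumr_ge0 => k _; exact: sqr_ge0. Qed.

Lemma enorm_sqr v : enorm v ^+ 2 = \sum_k v ord0 k ^+ 2.
Proof. by rewrite /enorm sqr_sqrtr // sumsq_ge0. Qed.

Lemma enormD u v : enorm (u + v) <= enorm u + enorm v.
Proof.
rewrite -(ler_pXn2r (n:=2)) //; last 2 first.
- by rewrite nnegrE enorm_ge0.
- by rewrite nnegrE addr_ge0 // enorm_ge0.
have cs : \sum_k u ord0 k * v ord0 k <= enorm u * enorm v.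
  rewrite /enorm -sqrtrM ?sumsq_ge0 //.
  apply: le_trans (ler_norm _) _; rewrite -sqrtr_sqr.
  exact/ler_wsqrtr/cauchy_schwarz.
have -> : enorm (u + v) ^+ 2 = enorm u ^+ 2 + enorm v ^+ 2
   + 2%:R * \sum_k u ord0 k * v ord0 k.
  rewrite !enorm_sqr mulr_sumr -!big_split /=; apply: eq_bigr => k _; rewrite mxE; ring.
rewrite sqrrD; nra.
Qed.

Lemma enormN v : enorm (- v) = enorm v.
Proof. by rewrite /enorm; congr Num.sqrt; apply: eq_bigr => k _; rewrite mxE sqrrN. Qed.

Lemma enormB u v : enorm (u - v) = enorm (v - u).
Proof. by rewrite -enormN opprB. Qed.

Lemma enorm_coord v k : `|v ord0 k| <= enorm v.
Proof.
rewrite -sqrtr_sqr /enorm; apply: ler_wsqrtr.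
rewrite (bigD1 k) //= lerDl; apply: sumr_ge0 => j _; exact: sqr_ge0.
Qed.

Lemma enorm_small v d : (forall k, `|v ord0 k| <= d) ->
  enorm v <= Num.sqrt (K%:R * d ^+ 2).
Proof.
move=> h; apply: ler_wsqrtr.
have -> : K%:R * d ^+ 2 = \sum_(k < K) d ^+ 2 by rewrite sumr_const card_ord mulr_natl.
apply: ler_sum => k _; have := h k; rewrite ler_norml => /andP[h1 h2].
have : 0 <= d by apply: le_trans (h k); exact: normr_ge0.
nra.
Qed.

Lemma rat_approx v d : 0 < d -> exists q : 'rV[rat]_K, enorm (v - map_mx ratr q) < d.
Proof.
move=> d0.
have [d' [d'0 hd]] : exists d', 0 < d' /\ d = d' * (K.+1)%:R.
  exists (d / (K.+1)%:R); split; first by rewrite divr_gt0 // ltr0n.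
  by rewrite divfK // pnatr_eq0.
have : forall k : 'I_K, exists r : rat, `|v ord0 k - ratr r| <= d'.
  move=> k; have [r] : exists r : rat, ratr r \in `]v ord0 k, v ord0 k + d'[.
    by apply: rat_in_itvoo; rewrite ltrDl.
  move=> hr; exists r; move: hr; rewrite in_itv /= => /andP[h1 h2].
  rewrite ler_norml; apply/andP; split; lra.
case/fin_all_exists => f hf; exists (\row_k f k).
apply: le_lt_trans (@enorm_small _ d' _) _.
  by move=> k; rewrite !mxE; exact: hf k.
have -> : d = Num.sqrt (d ^+ 2) by rewrite sqrtr_sqr gtr0_norm.
rewrite ltr_sqrt ?exprn_gt0 // hd -natr1.
have : 0 <= K%:R :> R by rewrite ler0n.
nra.
Qed.

End Enorm.

Section Dist.
Variables (R : realType) (K : nat) (W : set 'rV[R]_K) (hW0 : W !=set0).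

Lemma dist_hlb v : has_lbound [set enorm (v - w) | w in W].
Proof. by exists 0 => _ [w _ <-]; exact: enorm_ge0. Qed.

Lemma dist_le v w : W w -> dist_to W v <= enorm (v - w).
Proof. by move=> Ww; apply: (ge_inf (dist_hlb v)); exists w. Qed.

Lemma dist_ge v x : (forall w, W w -> x <= enorm (v - w)) -> x <= dist_to W v.
Proof.
move=> h; apply: lb_le_inf.
  by case: hW0 => w Ww; exists (enorm (v - w)); exists w.
by move=> _ [w Ww <-]; exact: h.
Qed.

Lemma dist_ge0 v : 0 <= dist_to W v.
Proof. by apply: dist_ge => w _; exact: enorm_ge0. Qed.

Lemma dist_lip u v : dist_to W v <= dist_to W u + enorm (v - u).
Proof.
rewrite -lerBlDr; apply: dist_ge => w Ww; rewrite lerBlDr.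
apply: le_trans (@dist_le v w Ww) _.
have -> : v - w = (u - w) + (v - u) by rewrite [RHS]addrC addrA subrK.
exact: enormD.
Qed.

End Dist.

Section Meas.
Variables (d : measure_display) (Omega : measurableType d) (R : realType) (K : nat).

Lemma meas_lt (f : Omega -> R) c : measurable_fun setT f ->
  measurable [set om | f om < c].
Proof.
move=> mf.
rewrite (_ : [set om | f om < c] = setT `&` f @^-1` [set` `]-oo, c[]).
  exact: mf.
by apply/seteqP; split => om /=; rewrite in_itv /= ?andbT //; move=> [].
Qed.

Variables (V : Omega -> 'rV[R]_K)
  (hV : forall k, measurable_fun setT (fun om => V om ord0 k)).

Lemma meas_enorm (c : 'rV[R]_K) : measurable_fun setT (fun om => enorm (V om - c)).
Proof.
rewrite /enorm.
have H : measurable_fun setT (fun om => \sum_k (V om - c) ord0 k ^+ 2).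
  have -> : (fun om => \sum_k (V om - c) ord0 k ^+ 2) =
      (fun om => \sum_k (V om ord0 k - c ord0 k) ^+ 2).
    by apply/funext => om; apply: eq_bigr => k _; rewrite !mxE.
  apply: measurable_sum => k; apply: measurable_realfun.measurable_funX.
  exact: measurable_realfun.measurable_funB (hV k) (measurable_cst _).
exact: (measurableT_comp (measurable_realfun.continuous_measurable_fun (@sqrt_continuous R)) H).
Qed.

Variables (W : set 'rV[R]_K) (hW0 : W !=set0).

Lemma meas_dist e : measurable [set om | dist_to W (V om) < e].
Proof.
rewrite (_ : [set om | dist_to W (V om) < e] = \bigcup_(q : 'rV[rat]_K)
   [set om | enorm (V om - map_mx ratr q) + dist_to W (map_mx ratr q) < e]).
  apply: countable_bigcupT_measurable; first exact: countableP.
  move=> q; apply: meas_lt; apply: measurable_realfun.measurable_funD (meas_enorm _) (measurable_cst _).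
apply/seteqP; split => om /=.
- move=> h; set v := V om.
  have h' : 0 < (e - dist_to W v) / 2%:R by rewrite divr_gt0 // subr_gt0.
  have [q hq] := @rat_approx R K v _ h'.
  exists q => //=.
  have := @dist_lip R K W hW0 v (map_mx ratr q).
  rewrite enormB; lra.
- case => q _ /= h.
  have := @dist_lip R K W hW0 (map_mx ratr q) (V om).
  lra.
Qed.

End Meas.

Import measurable_realfun.
Lemma ev_le (R : realType) (u : nat -> \bar R) e : u @ \oo --> 0%E -> 0 < e ->
  \forall n \near \oo, (u n <= e%:E)%E.
Proof.
move=> /fine_cvgP [hfin hc] e0.
near=> n.
have hf : u n \is a fin_num by near: n.
have hn : `|0 - (fine \o u) n| < e by near: n; exact: cvgr_dist_lt.
move: hn; rewrite sub0r normrN => hn; rewrite -(fineK hf) lee_fin.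
exact: le_trans (ler_norm _) (ltW hn).
Unshelve. all: by end_near.
Qed.

Lemma liminf_lb (R : realType) (u : nat -> \bar R) (b : R) :
  (exists N, forall n, (N <= n)%N -> (b%:E <= u n)%E) -> (b%:E <= limn_einf u)%E.
Proof.
case=> N hN; rewrite limn_einf_lim (cvg_lim _ (@cvg_einfs_sup _ u)) //.
apply: (@le_trans _ _ (einfs u N)); last by apply: ereal_sup_ubound; exists N.
rewrite /einfs /=; apply/ereal_infP => _ [k hk <-]; exact: hN.
Qed.

Lemma meas_gt d (Omega : measurableType d) (R : realType) (f : Omega -> R) c :
  measurable_fun setT f -> measurable [set om | c < f om].
Proof.
move=> mf.
rewrite (_ : [set om | c < f om] = setT `&` f @^-1` [set` `]c, +oo[]).
  exact: mf.
by apply/seteqP; split => om /=; rewrite in_itv /= ?andbT //; move=> [].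
Qed.

Lemma meas_ge d (Omega : measurableType d) (R : realType) (f : Omega -> R) c :
  measurable_fun setT f -> measurable [set om | c <= f om].
Proof.
move=> mf; rewrite (_ : [set om | c <= f om] = ~` [set om | f om < c]).
  exact/measurableC/meas_lt.
by apply/seteqP; split => om /=; rewrite leNgt => /negP.
Qed.
Theorem theorem4
  (R : realType)
  (d : measure_display) (Omega : measurableType d) (P : probability Omega R)
  (mu : probability R R)
  (dD : measure_display) (Td : measurableType dD)
  (D : nat -> Omega -> Td) (hD : forall n, measurable_fun setT (D n))
  (K : nat) (hK : (2 <= K)%N) (alpha : R) (halpha : 0 < alpha < 1)
  (C : nat -> 'I_K -> Td -> set R)
  (hC : forall n k, measurable [set p : Td * R | C n k p.1 p.2])
  (w : nat -> Td -> 'rV[R]_K)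
  (hw_simplex : forall n t, simplex (w n t))
  (hw_meas : forall n k, measurable_fun setT (fun t => w n t ord0 k))
  (W : set 'rV[R]_K)
  (hW0 : W !=set0) (hWsub : W `<=` simplex (R:=R) (K:=K))
  (hWclosed : closed W) (hWconvex : convex_wset W)
  (A1 : cvg_in_prob P
          (fun n om => \big[Num.max/0]_(k < K)
                         `|fine (mu (~` C n k (D n om))) - alpha|) 0)
  (A2 : cvg_in_prob P (fun n om => dist_to W (w n (D n om))) 0)
  (kstar : 'I_K) (hkstar : 2^-1 < inf [set v ord0 kstar | v in W]) :
  ((1 - alpha)%:E <=
     limn_einf (fun n => (P \x mu)
        [set p : Omega * R | C_comb (w n) (C n) (D n p.1) p.2]))%E.
Proof.
have hV : forall n k, measurable_fun setT (fun om => w n (D n om) ord0 k).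
  by move=> n k; exact: measurableT_comp (hw_meas n k) (hD n).
have Wlb : has_lbound [set v ord0 kstar | v in W].
  by exists 0 => _ [v Wv <-]; have [h _] := hWsub v Wv; exact: h.
have m_lb : forall v, W v -> inf [set v ord0 kstar | v in W] <= v ord0 kstar.
  by move=> v Wv; apply: (ge_inf Wlb); exists v.
set m := inf [set v ord0 kstar | v in W] in hkstar m_lb.
have eps2_0 : 0 < m - 2^-1 by rewrite subr_gt0.
have xsecE : forall n k t, C n k t = xsection [set p | C n k p.1 p.2] t.
  by move=> n k t; apply/seteqP; split => y; rewrite /xsection /= in_setE.
have mCk : forall n k t, measurable (C n k t).
  by move=> n k t; rewrite xsecE; exact: measurable_xsection.
pose g n k om := `|fine (mu (~` C n k (D n om))) - alpha|.
have mg : forall n k, measurable_fun setT (g n k).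
  move=> n k; rewrite /g.
  have H1 : measurable_fun setT (fun om => mu (~` C n k (D n om))).
    have -> : (fun om => mu (~` C n k (D n om))) =
        (mu \o xsection (~` [set p | C n k p.1 p.2])) \o D n.
      apply/funext => om /=; congr (mu _); apply/seteqP; split => y;
        rewrite /xsection /= in_setE //.
    exact: measurableT_comp (measurable_fun_xsection mu (measurableC (hC n k))) (hD n).
  have H2 : measurable_fun setT (fun om => fine (mu (~` C n k (D n om))) - alpha).
    apply: measurable_realfun.measurable_funB (measurable_cst _).
    exact (measurableT_comp (measurable_realfun.fine_measurable measurableT) H1).
  exact (measurableT_comp (@measurable_realfun.normr_measurable R setT) H2).
have mh : forall n, measurable_fun setT
    (fun om => \big[Num.max/0]_(k < K) g n k om).
  move=> n.
  suff : forall s : seq 'I_K, measurable_fun setT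
      (fun om => \big[Num.max/0]_(k <- s) g n k om) by apply.
  elim => [|k s IH].
    rewrite (_ : (fun om => _) = fun _ => 0); first exact: measurable_cst.
    by apply/funext => om; rewrite big_nil.
  rewrite (_ : (fun om => _) = fun om => Num.max (g n k om)
     (\big[Num.max/0]_(k <- s) g n k om)).
    exact: measurable_realfun.measurable_maxr.
  by apply/funext => om; rewrite big_cons.
have mS : forall n, measurable [set p : Omega * R | C_comb (w n) (C n) (D n p.1) p.2].
  move=> n.
  have mI : forall k, measurable_fun setT
      (fun p : Omega * R => ((p.2 \in C n k (D n p.1))%:R : R)).
    move=> k.
    have mpre : measurable ((fun p : Omega * R => (D n p.1, p.2)) @^-1` [set q | C n k q.1 q.2]).
      rewrite -[X in measurable X]setTI.
      apply: (measurable_fun_pair (measurableT_comp (hD n) measurable_fst) measurable_snd) => //.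
    rewrite (_ : (fun p : Omega * R => _) = \1_((fun p : Omega * R => (D n p.1, p.2)) @^-1` [set q | C n k q.1 q.2])).
      exact: measurable_realfun.measurable_indic.
    apply/funext => p; rewrite indicE; congr (_%:R); apply/idP/idP; rewrite !in_setE //.
  have mf : measurable_fun setT (fun p : Omega * R =>
      \sum_(k < K) w n (D n p.1) ord0 k * (p.2 \in C n k (D n p.1))%:R).
    apply: measurable_sum => k; apply: measurable_realfun.measurable_funM (mI k).
    exact (measurableT_comp (hV n k) measurable_fst).
  exact: meas_gt mf.
have key : forall e, 0 < e -> e < 1 - alpha -> exists N, forall n, (N <= n)%N ->
    (((1 - alpha - e) * (1 - 2%:R * e))%:E <=
     (P \x mu) [set p : Omega * R | C_comb (w n) (C n) (D n p.1) p.2])%E.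
  move=> e e0 ea.
  have E1 := @ev_le R _ _ (A1 e e0) e0; have E2 := @ev_le R _ _ (A2 _ eps2_0) e0.
  case: E1 => N1 _ hN1; case: E2 => N2 _ hN2.
  exists (maxn N1 N2) => n hn.
  have /= h1 := hN1 n (leq_trans (leq_maxl _ _) hn).
  have /= h2 := hN2 n (leq_trans (leq_maxr _ _) hn).
  pose G := [set om | 2^-1 < w n (D n om) ord0 kstar].
  pose F := [set om | \big[Num.max/0]_(k < K) g n k om < e].
  have mG : measurable G by exact: meas_gt.
  have mF : measurable F by exact: meas_lt.
  have mA : measurable (G `&` F) by exact: measurableI.
  have hB2 : ~` G `<=` [set om | m - 2^-1 <= `|dist_to W (w n (D n om)) - 0|].
    move=> om /= hnG; rewrite subr0 ger0_norm; last exact: dist_ge0.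
    apply: dist_ge => // w0 Ww0.
    have h3 := m_lb w0 Ww0.
    have := @enorm_coord R K (w n (D n om) - w0) kstar; rewrite !mxE.
    have := ler_norm (- (w n (D n om) ord0 kstar - w0 ord0 kstar)); rewrite normrN.
    have : w n (D n om) ord0 kstar <= 2^-1 by rewrite leNgt; apply/negP.
    lra.
  have mB2 : measurable [set om | m - 2^-1 <= `|dist_to W (w n (D n om)) - 0|].
    rewrite (_ : [set om | _] = ~` [set om | dist_to W (w n (D n om)) < m - 2^-1]).
      exact/measurableC/meas_dist.
    apply/seteqP; split => om /=; rewrite subr0 ger0_norm ?dist_ge0 // leNgt => /negP //.
  have hB1 : ~` F `<=` [set om | e <= `|\big[Num.max/0]_(k < K) g n k om - 0|].
    move=> om /= hnF; rewrite subr0; apply: le_trans (ler_norm _).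
    by rewrite leNgt; apply/negP.
  have mB1 : measurable [set om | e <= `|\big[Num.max/0]_(k < K) g n k om - 0|].
    apply: meas_ge.
    exact (measurableT_comp (@measurable_realfun.normr_measurable R setT) (measurable_realfun.measurable_funB (mh n) (@measurable_cst _ _ Omega _ setT (0:R)))).
  have hPnA : (P (~` (G `&` F)) <= (e + e)%:E)%E.
    rewrite setCI; apply: le_trans (measureU2 _ (measurableC mG) (measurableC mF)) _.
    rewrite EFinD; apply: leeD.
    - apply: le_trans h2; apply: le_measure => //; rewrite inE //; exact: measurableC.
    - apply: le_trans h1; apply: le_measure => //; rewrite inE //; exact: measurableC.
  have finA := fin_num_measure P _ mA.
  have hPA : ((1 - 2%:R * e)%:E <= P (G `&` F))%E.
    move: hPnA; rewrite probability_setC // -(fineK finA) -EFinB lee_fin => h.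
    rewrite lee_fin; lra.
  have c0 : 0 <= 1 - alpha - e by lra.
  have hsec : forall om, (G `&` F) om -> ((1 - alpha - e)%:E <=
      mu (xsection [set p : Omega * R | C_comb (w n) (C n) (D n p.1) p.2] om))%E.
    move=> om [hG hF].
    have mC := mCk n kstar (D n om).
    apply: (@le_trans _ _ (mu (C n kstar (D n om)))).
      have finC := fin_num_measure mu _ (measurableC mC).
      have finC2 := fin_num_measure mu _ mC.
      have hg : g n kstar om < e.
        apply: le_lt_trans hF; exact: le_bigmax.
      move: hg; rewrite /g ltr_norml => /andP[_ hg2].
      have hCC : fine (mu (~` C n kstar (D n om))) = 1 - fine (mu (C n kstar (D n om))).
        by rewrite (probability_setC mu mC) -(fineK finC2) -EFinB /=.
      rewrite -(fineK finC2) lee_fin; lra.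
    apply: le_measure; rewrite ?inE //; first exact: measurable_xsection.
    move=> y hy; rewrite /xsection /= in_setE /C_comb /=.
    rewrite (bigD1 kstar) //=.
    rewrite (mem_set hy).
    rewrite mulr1; apply: lt_le_trans hG _; rewrite lerDl.
    apply: sumr_ge0 => k _; apply: mulr_ge0; last exact: ler0n.
    by have [h _] := hw_simplex n (D n om); exact: h.
  rewrite /product_measure1 /=.
  apply: (@le_trans _ _ ((1 - alpha - e)%:E * P (G `&` F))%E).
    by rewrite EFinM; apply: lee_wpmul2l => //; rewrite lee_fin.
  rewrite -(setIT (G `&` F)) -integral_indic //.
  rewrite -ge0_integralZl_EFin //; cycle 1.
    all: try (by move=> x _; rewrite lee_fin indicE ler0n).
    all: try (by apply/measurable_realfun.measurable_EFinP; exact: measurable_realfun.measurable_indic).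
  apply: ge0_le_integral => //.
  - by move=> x _; apply: mule_ge0; rewrite lee_fin // indicE ler0n.
  - by apply/measurable_funeM/measurable_realfun.measurable_EFinP; exact: measurable_realfun.measurable_indic.
  - exact (measurable_fun_xsection mu (mS n)).
  - move=> x _; rewrite indicE; case: (boolP (x \in G `&` F)) => hx.
      by rewrite (_ : (true%:R : R) = 1) // mule1; apply: hsec; rewrite -in_setE.
    by rewrite (_ : (false%:R : R) = 0) // mule0; exact: measure_ge0.
apply/lee_addgt0Pr => e' e'0.
pose e := Num.min (e' / 3%:R) ((1 - alpha) / 2%:R).
have ha0 : 0 < alpha by case/andP: halpha.
have ha1 : alpha < 1 by case/andP: halpha.
have e1 : e <= e' / 3%:R by rewrite ge_min lexx.
have e2 : e <= (1 - alpha) / 2%:R by rewrite ge_min lexx orbT.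
have e0 : 0 < e by rewrite lt_min !divr_gt0 // subr_gt0.
have ea : e < 1 - alpha by apply: le_lt_trans e2 _; lra.
have [N hN] := key e e0 ea.
have hL := @liminf_lb R _ ((1 - alpha - e) * (1 - 2%:R * e)) (ex_intro _ N hN).
apply: le_trans (leeD hL (lexx e'%:E)).
rewrite -EFinD lee_fin.
have : 0 <= (1 - alpha - e) by lra.
have : 1 - alpha - e <= 1 by lra.
nra.
Qed.
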